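(* Let $p\equiv1\pmod 4$ be a prime power and $q=\frac12(p+1)$. Then there exist two weighing matrices of order $4q$ and weight $4q-2$ that are quasi-unbiased for the parameters $(4q,4q-2,4,(2q-1)^2)$.
   Context: A weighing matrix of order $n$ and weight $k$ is an $n\times n$ $(0,1,-1)$-matrix $W$ with $WW^\top=kI_n$. Weighing matrices $W_1,W_2$ of order $n$ and weight $k$ are quasi-unbiased for parameters $(n,k,l,a)$ if $\frac1{\sqrt a}W_1W_2^\top$ is a weighing matrix of order $n$ and weight $l$. *)

(* Defs.v *)
From HB Require Import structures.
From mathcomp Require Import all_boot all_order all_algebra.
Set Implicit Arguments. Unset Strict Implicit. Unset Printing Implicit Defensive.
Import Order.TTheory GRing.Theory Num.Theory.
Local Open Scope ring_scope.

Definition weighing_matrix (R : numDomainType) (n k : nat) (W : 'M[R]_n) : Prop :=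
  (forall i j, W i j = 0 \/ W i j = 1 \/ W i j = -1) /\
  W *m W^T = (k%:R)%:M.

Definition quasi_unbiased (R : rcfType) (n k l a : nat) (W1 W2 : 'M[R]_n) : Prop :=
  [/\ weighing_matrix k W1, weighing_matrix k W2 &
      weighing_matrix l ((Num.sqrt (a%:R : R))^-1 *: (W1 *m W2^T))].

Definition prime_power (p : nat) : Prop :=
  exists r k : nat, prime r /\ (0 < k)%N /\ p = (r ^ k)%N.

(* Main.v *)
Require Import Defs.
From HB Require Import structures.
From mathcomp Require Import all_boot all_order all_algebra all_fingroup all_field.
From mathcomp Require Import ring lra zify.
Import Order.TTheory GRing.Theory Num.Theory.
Local Open Scope ring_scope.

Definition tri {R : numDomainType} (x : R) : Prop := x = 0 \/ x = 1 \/ x = -1.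

Definition chi (R : numDomainType) {F : finFieldType} (e : nat) (x : F) : R :=
  if x == 0 then 0 else if x ^+ e == 1 then 1 else -1.

Lemma pow_card1 {F : finFieldType} (x : F) : x != 0 -> x ^+ #|F|.-1 = 1.
Proof.
move=> nz; have := expf_card x.
rewrite -(ltn_predK (finNzRing_gt1 F)) exprS => H.
by apply: (mulfI nz); rewrite H mulr1.
Qed.

Lemma pow_e {F : finFieldType} (e : nat) : #|F| = (2*e).+1 ->
  forall x : F, x != 0 -> x ^+ e = 1 \/ x ^+ e = -1.
Proof.
move=> hc x nz; have := pow_card1 x nz; rewrite hc /= mulnC exprM => /eqP.
by rewrite sqrf_eq1 => /orP[/eqP->|/eqP->]; [left|right].
Qed.

Lemma m1_neq1 {F : finFieldType} : (2%:R : F) != 0 -> (-1 == 1 :> F) = false.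
Proof.
move=> h2; apply/negbTE; apply: contra h2 => /eqP h.
rewrite (_ : 2%:R = 1 - -1 :> F); last by ring.
by rewrite h subrr.
Qed.

Lemma chi0 (R : numDomainType) {F : finFieldType} e : chi R e (0 : F) = 0.
Proof. by rewrite /chi eqxx. Qed.

Lemma chi_nz (R : numDomainType) {F : finFieldType} e (x : F) : #|F| = (2*e).+1 ->
  (2%:R : F) != 0 -> x != 0 ->
  (x ^+ e = 1 /\ chi R e x = 1) \/ (x ^+ e = -1 /\ chi R e x = -1).
Proof.
move=> hc h2 nz; rewrite /chi (negbTE nz).
case: (pow_e e hc x nz) => ->; first by left; rewrite eqxx.
by right; rewrite m1_neq1.
Qed.

Lemma chi_sq (R : numDomainType) {F : finFieldType} e (x : F) :
  chi R e x * chi R e x = (x != 0)%:R.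
Proof.
rewrite /chi; case: eqP => _ /=; first by rewrite mulr0.
by case: eqP => _; rewrite ?mulr1 ?mulrNN ?mulr1.
Qed.

Lemma chiM (R : numDomainType) {F : finFieldType} e (x y : F) : #|F| = (2*e).+1 ->
  (2%:R : F) != 0 -> chi R e (x * y) = chi R e x * chi R e y.
Proof.
move=> hc h2.
have [->|nx] := eqVneq x 0; first by rewrite mul0r chi0 mul0r.
have [->|ny] := eqVneq y 0; first by rewrite mulr0 chi0 mulr0.
have nxy : x * y != 0 by rewrite mulf_neq0.
rewrite {1}/chi (negbTE nxy) exprMn.
case: (chi_nz R e x hc h2 nx) => [[-> ->]|[-> ->]];
case: (chi_nz R e y hc h2 ny) => [[-> ->]|[-> ->]];
by rewrite ?(mulr1, mul1r, mulrN1, mulN1r, opprK, eqxx, m1_neq1 h2).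
Qed.

Lemma chi1 (R : numDomainType) {F : finFieldType} e : chi R e (1 : F) = 1.
Proof. by rewrite /chi oner_eq0 expr1n eqxx. Qed.

Lemma chi_nontriv (R : numDomainType) {F : finFieldType} e : #|F| = (2*e).+1 ->
  (2%:R : F) != 0 -> exists x0 : F, chi R e x0 = -1.
Proof.
move=> hc h2.
have e_gt0 : (0 < e)%N.
  case: e hc => // hc; have := finNzRing_gt1 F; by rewrite hc.
case: (boolP [exists x : F, (x != 0) && (x ^+ e != 1)]).
  move=> /existsP[x /andP[nz ne]]; exists x.
  by case: (chi_nz R e x hc h2 nz) => [[h _]|[_ ->]] //; rewrite h eqxx in ne.
rewrite negb_exists => /forallP H; exfalso.
have := @max_unity_roots F e (enum [pred x : F | x != 0]) e_gt0.
have -> : all e.-unity_root (enum [pred x : F | x != 0]).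
  apply/allP => x; rewrite mem_enum inE => nz.
  by have := H x; rewrite nz /= negbK unity_rootE.
rewrite enum_uniq -cardE cardC1 hc /= => /(_ isT isT).
move=> h; lia.
Qed.

Lemma sum_chi (R : rcfType) {F : finFieldType} e : #|F| = (2*e).+1 ->
  (2%:R : F) != 0 -> \sum_(x : F) chi R e x = 0.
Proof.
move=> hc h2; have [x0 hx0] := chi_nontriv R e hc h2.
have nz : x0 != 0.
  by apply/eqP => h0; move: hx0; rewrite h0 chi0 => /eqP; rewrite eq_sym oppr_eq0 oner_eq0.
have E : \sum_(x : F) chi R e x = \sum_(x : F) chi R e (x0 * x).
  exact: (reindex_inj (mulfI nz)).
have E2 : \sum_(x : F) chi R e (x0 * x) = - \sum_(x : F) chi R e x.
  rewrite -mulN1r mulr_sumr; apply: eq_bigr => x _.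
  by rewrite chiM // hx0.
lra.
Qed.

Lemma sum_chi_sub (R : rcfType) {F : finFieldType} e (u : F) : #|F| = (2*e).+1 ->
  (2%:R : F) != 0 -> \sum_(x : F) chi R e (u - x) = 0.
Proof.
move=> hc h2.
have hi : injective (fun x : F => u - x).
  by move=> a b /(congr1 (fun t => u - t)); rewrite !subKr.
rewrite (reindex_inj hi) /=.
under eq_bigr => x _ do rewrite subKr.
exact: sum_chi.
Qed.

Lemma sum_chi_shift (R : rcfType) {F : finFieldType} e (d : F) : #|F| = (2*e).+1 ->
  (2%:R : F) != 0 -> d != 0 -> \sum_(c : F) chi R e c * chi R e (c + d) = -1.
Proof.
move=> hc h2 nd.
have E : forall c : F, chi R e c * chi R e (c + d) = chi R e (1 + d * c^-1) - (c == 0)%:R.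
  move=> c; have [->|nc] := eqVneq c 0.
    by rewrite chi0 mul0r invr0 mulr0 addr0 chi1 ?eqxx ?subrr.
  rewrite subr0 (_ : c + d = c * (1 + d * c^-1)); last first.
    by rewrite mulrDr mulr1 mulrCA divff // mulr1.
  by rewrite chiM // mulrA chi_sq nc mul1r.
rewrite (eq_bigr _ (fun c _ => E c)) sumrB.
have -> : \sum_(c : F) chi R e (1 + d * c^-1) = \sum_(c : F) chi R e c.
  symmetry; apply: (reindex_inj (F := chi R e) (h := fun c => 1 + d * c^-1)).
  by move=> a b /addrI /(mulfI nd) /invr_inj.
rewrite sum_chi // (bigD1 0) //= eqxx big1 ?addr0 ?sub0r //.
by move=> c /negbTE ->.
Qed.

Lemma sum_chi_pair (R : rcfType) {F : finFieldType} e (u v : F) : #|F| = (2*e).+1 ->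
  (2%:R : F) != 0 ->
  \sum_(x : F) chi R e (u - x) * chi R e (v - x) =
    if u == v then (#|F|%:R - 1) else -1.
Proof.
move=> hc h2.
rewrite (reindex_inj (F := fun x => chi R e (u - x) * chi R e (v - x)) (h := fun x => u - x)); last first.
  by move=> a b /(congr1 (fun t => u - t)); rewrite !subKr.
have hvu : forall x : F, v - (u - x) = x + (v - u) by move=> x; ring.
under eq_bigr => x _ do rewrite subKr hvu.
have [<-|neq] := eqVneq u v.
  under eq_bigr => x _ do rewrite subrr addr0 chi_sq.
  rewrite (bigD1 0) //= eqxx add0r.
  rewrite (eq_bigr (fun _ => 1)); last by move=> x ->.
  by rewrite sumr_const cardC1 hc /= -[(2*e).+1]addn1 natrD addrK.
apply: sum_chi_shift => //; by rewrite subr_eq0 eq_sym.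
Qed.


Definition confm (R : numDomainType) (F : finFieldType) e : 'M[R]_(#|F|.+1) :=
  \matrix_(i, j) match unlift ord0 i, unlift ord0 j with
                 | None, None => 0
                 | None, Some _ => 1
                 | Some _, None => 1
                 | Some a, Some b => chi R e (enum_val a - enum_val b)
                 end.

Lemma chi_tri (R : numDomainType) {F : finFieldType} e (x : F) : tri (chi R e x).
Proof. by rewrite /chi /tri; case: eqP => _; [left|case: eqP => _; right; [left|right]]. Qed.

Lemma confm_tri (R : numDomainType) (F : finFieldType) e i j : tri (confm R F e i j).
Proof.
rewrite mxE; case: (unlift ord0 i) => [a|]; case: (unlift ord0 j) => [b|];
  rewrite /tri; by [apply: chi_tri| right; left | left].
Qed.

Lemma sum_enum {R : numDomainType} {F : finFieldType} (f : F -> R) :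
  \sum_(k < #|F|) f (enum_val k) = \sum_(x : F) f x.
Proof.
symmetry; rewrite (reindex (@enum_val F predT)) //.
by exists enum_rank => x _; [rewrite enum_valK | rewrite enum_rankK].
Qed.

Lemma confm_orth (R : rcfType) (F : finFieldType) e : #|F| = (2*e).+1 ->
  (2%:R : F) != 0 -> confm R F e *m (confm R F e)^T = (#|F|%:R)%:M.
Proof.
move=> hc h2; apply/matrixP => i j.
rewrite !mxE big_ord_recl.
under eq_bigr => k _ do rewrite !mxE liftK.
rewrite !mxE unlift_none.
case: (unliftP ord0 i) => [a ->|->]; case: (unliftP ord0 j) => [b ->|->];
  rewrite ?liftK ?unlift_none.
- rewrite mul1r (sum_enum (fun x => chi R e (enum_val a - x) * chi R e (enum_val b - x))).
  rewrite sum_chi_pair // (inj_eq enum_val_inj) (inj_eq (@lift_inj _ ord0)).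
  by case: eqP => _; rewrite ?mulr1n ?mulr0n ?addrN // addrC subrK.
- rewrite mulr0 add0r (eq_bigr (fun k => chi R e (enum_val a - enum_val k))); last by move=> k; rewrite mulr1.
  rewrite (sum_enum (fun x => chi R e (enum_val a - x))) sum_chi_sub //.
- rewrite mul0r add0r (eq_bigr (fun k => chi R e (enum_val b - enum_val k))); last by move=> k; rewrite mul1r.
  rewrite (sum_enum (fun x => chi R e (enum_val b - x))) sum_chi_sub //.
- rewrite mul0r add0r (eq_bigr (fun k => 1)); last by move=> k; rewrite mulr1.
  by rewrite sumr_const card_ord eqxx mulr1n.
Qed.

Lemma tri_neg {R : numDomainType} (x : R) : tri x -> tri (- x).
Proof. by rewrite /tri => -[->|[->|->]]; rewrite ?oppr0 ?opprK; [left|right;right|right;left]. Qed.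

Lemma block_tri {R : numDomainType} m (A B C D : 'M[R]_m) :
  (forall i j, tri (A i j)) -> (forall i j, tri (B i j)) ->
  (forall i j, tri (C i j)) -> (forall i j, tri (D i j)) ->
  forall i j, tri (block_mx A B C D i j).
Proof.
move=> hA hB hC hD i j; rewrite -(splitK i) -(splitK j).
case: (split i) => i'; case: (split j) => j' /=;
by rewrite ?block_mxEul ?block_mxEur ?block_mxEdl ?block_mxEdr.
Qed.

Lemma perm_entry {R : numDomainType} n (s : 'S_n) i j :
  (perm_mx s : 'M[R]_n) i j = (s i == j)%:R.
Proof. by rewrite /perm_mx /row_perm !mxE. Qed.

Lemma scal_add {R : numDomainType} m (a b : R) : a%:M + b%:M = (a + b)%:M :> 'M_m.
Proof. by apply/matrixP => i j; rewrite !mxE mulrnDl. Qed.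

Lemma main_mx (R : rcfType) (n pp : nat) (C : 'M[R]_(n.+1)) (s : 'S_(n.+1)) :
  (forall i j, tri (C i j)) -> C *m C^T = (pp%:R)%:M -> (0 < pp)%N ->
  (forall i, s i != i) ->
  exists W1 W2 : 'M[R]_(n.+1 + n.+1),
    quasi_unbiased (n := n.+1 + n.+1) (2 * pp) 4 (pp ^ 2) W1 W2.
Proof.
move=> htC hC hp hs.
pose P : 'M[R]_(n.+1) := perm_mx s.
pose Q : 'M[R]_(n.+1) := perm_mx s^-1.
have hPT : P^T = Q by rewrite /P tr_perm_mx.
have hQT : Q^T = P by rewrite /Q tr_perm_mx invgK.
have hQP : Q *m P = 1%:M by rewrite /Q /P -perm_mxM mulVg perm_mx1.
have hPQ : P *m Q = 1%:M by rewrite /Q /P -perm_mxM mulgV perm_mx1.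
have hDD : P *m C *m C^T *m Q = (pp%:R)%:M.
  by rewrite -(mulmxA P C) hC mul_mx_scalar -scalemxAl hPQ scalemx1.
pose D := P *m C.
have htD : forall i j, tri (D i j).
  by move=> i j; rewrite /D -row_permE mxE.
have htN : forall (A : 'M[R]_(n.+1)), (forall i j, tri (A i j)) -> forall i j, tri ((- A) i j).
  by move=> A hA i j; rewrite mxE; apply: tri_neg.
exists (block_mx C C C (- C)), (block_mx C D C (- D)).
have hpz : (pp%:R : R) != 0 by rewrite pnatr_eq0 -lt0n.
split.
- split; first by apply: block_tri => //; apply: htN.
  rewrite tr_block_mx mulmx_block !linearN /= ?mulNmx ?mulmxN hC ?opprK ?subrr ?addrN.
  by rewrite [RHS]scalar_mx_block scal_add mulSn mul1n natrD.
- split; first by apply: block_tri => //; apply: htN.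
  rewrite tr_block_mx mulmx_block !linearN /= /D trmx_mul ?mulNmx ?mulmxN ?mulmxA hC ?opprK ?subrr ?addrN ?hPT.
  rewrite hDD ?subrr.
  by rewrite [RHS]scalar_mx_block scal_add mulSn mul1n natrD.
pose B := block_mx (1%:M + Q) (1%:M - Q) (1%:M - Q) (1%:M + Q).
have hW : block_mx C C C (- C) *m (block_mx C D C (- D))^T = pp%:R *: B.
  rewrite tr_block_mx mulmx_block !linearN /= /D !mulNmx trmx_mul !mulmxA hC hPT opprK.
  by rewrite mul_scalar_mx /B scale_block_mx !scalerDr !scalerN scalemx1.
rewrite hW natrX sqrtr_sqr ger0_norm ?ler0n // scalerA mulVf // scale1r.
split.
- have hex : forall i j : 'I_n.+1, ~~ ((i == j) && ((s^-1)%g i == j)).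
    move=> i j; apply/negP => /andP[/eqP ei /eqP h].
    by subst j; have := hs i; rewrite -{1}h permKV eqxx.
  have hE1 : forall i j, tri ((1%:M + Q) i j).
    move=> i j; rewrite !mxE; move: (hex i j).
    by case: (i == j); case: ((s^-1)%g i == j); rewrite /tri /= ?addr0 ?add0r; auto.
  have hE2 : forall i j, tri ((1%:M - Q) i j).
    move=> i j; rewrite !mxE; move: (hex i j).
    by case: (i == j); case: ((s^-1)%g i == j); rewrite /tri /= ?subr0 ?sub0r ?subrr; auto.
  by apply: block_tri.
- rewrite /B tr_block_mx mulmx_block !linearD !linearN /= trmx1 hQT.
  rewrite ?mulmxN ?mulmxDl ?mulmxBl ?mulmx1 ?mul1mx hQP [RHS]scalar_mx_block.
  rewrite ?mulNmx hQP.
  by congr block_mx; apply/matrixP => i j; rewrite !mxE; ring.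
Qed.

Theorem proposition4p10 (R : rcfType) (p q : nat) :
  prime_power p -> (p %% 4 = 1)%N -> (2 * q = p + 1)%N ->
  exists W1 W2 : 'M[R]_(4 * q),
    quasi_unbiased (n:=4 * q) (4 * q - 2)%N 4 ((2 * q - 1) ^ 2)%N W1 W2.
Proof.
move=> [r [k [pr [k0 hp]]]] h4 hq.
have [F rchar cardF] := pPrimePowerField pr k0.
rewrite -hp in cardF.
have hd := divn_eq p 4; rewrite h4 in hd.
pose e := (2 * (p %/ 4))%N.
have hc : #|F| = (2 * e).+1 by rewrite cardF /e; lia.
have h2 : (2%:R : F) != 0.
  apply/negP => /eqP h0.
  have : 2 \in [pchar F] by apply/andP; split => //; apply/eqP.
  rewrite (pcharf_eq rchar) => /eqP r2; subst r.
  move: hp; case: k k0 => // k' _; rewrite expnS => hp.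
  lia.
pose s : 'S_(#|F|.+1) := perm (@ordS_inj _).
have hs : forall i, s i != i.
  move=> i; rewrite permE; apply/eqP => /(congr1 val) /=.
  have := ltn_ord i; have := finNzRing_gt1 F; move: (nat_of_ord i) => m; move: (#|F|) => N.
  move=> g1 g2; case: (ltngtP m.+1 N.+1) => h.
  - by rewrite modn_small // => /esym /n_Sn.
  - by move=> _; lia.
  - by rewrite h modnn => m0; lia.
have := @main_mx R #|F| #|F| (confm R F e) s (confm_tri R F e) (confm_orth R F e hc h2).
move=> /(_ (ltac:(apply: ltnW; exact: finNzRing_gt1)) hs) H.
rewrite cardF in H.
rewrite (_ : (4 * q - 2 = 2 * p)%N); last by lia.
rewrite (_ : ((2 * q - 1) ^ 2 = p ^ 2)%N); last by congr (_ ^ _)%N; lia.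
rewrite (_ : (4 * q = p.+1 + p.+1)%N); last by lia.
exact: H.
Qed.
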